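(* Let $n\ge 2$, $\sigma=(1,2,\dots,n-1)\in S_n$, and $\rho\in S_n$ defined by $\rho(n-1)=n$, $\rho(n)=n-1$, $\rho(k)=n-1-k$ for $1\le k\le n-2$. Suppose $\tau\in S_n$ has order $2$, $\tau(n)=n-1$, and $\tau\sigma^k\tau=\sigma^{\tau(k)}\tau\sigma^{\tau\rho\tau(k)}$ for all $k\in\{1,\dots,n-2\}$. Then for every $a\in\{1,\dots,n-1\}$ with $\gcd(a,n-1)=1$, the permutation $m_a\tau m_a^{-1}$ also has order $2$, sends $n$ to $n-1$, and satisfies $(m_a\tau m_a^{-1})\sigma^k(m_a\tau m_a^{-1})=\sigma^{\tau'(k)}\tau'\sigma^{\tau'\rho\tau'(k)}$ for all $k\in\{1,\dots,n-2\}$, where $\tau'=m_a\tau m_a^{-1}$.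
   Context: $S_n$ is the symmetric group on $\{1,\dots,n\}$ with product given by composition (rightmost applied first). Identify $\{1,\dots,n-1\}$ with $\mathbb{Z}/(n-1)\mathbb{Z}$ via $k\mapsto k \bmod (n-1)$ (so $n-1$ corresponds to $0$), and hence $\{1,\dots,n\}$ with $\mathbb{Z}/(n-1)\mathbb{Z}\cup\{n\}$. For $a$ coprime to $n-1$, $m_a\in S_n$ is multiplication by $a$ on $\mathbb{Z}/(n-1)\mathbb{Z}$, extended by $m_a(n)=n$. *)

(* Defs.v *)
From mathcomp Require Import all_boot all_fingroup.
From mathcomp Require Import zify.
Set Implicit Arguments. Unset Strict Implicit. Unset Printing Implicit Defensive.

(* Encoding: S_n is {perm 'I_n}; the point k of {1,...,n} is the ordinal
   with value k-1.  [lab i] is the label in {1,...,n} of i : 'I_n. *)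
Definition lab {n} (i : 'I_n) : nat := i.+1.

(* Composition in the paper's convention: (circ s t) x = s (t x)
   ("rightmost applied first").  MathComp's s * t applies s first. *)
Definition circ {n} (s t : {perm 'I_n}) : {perm 'I_n} := (t * s)%g.

Lemma circE n (s t : {perm 'I_n}) x : circ s t x = s (t x).
Proof. by rewrite /circ permM. Qed.

Definition perm_of {n} (f : 'I_n -> 'I_n) : {perm 'I_n} :=
  match injectiveP f with ReflectT h => perm h | ReflectF _ => 1%g end.

Lemma perm_ofE n (f : 'I_n -> 'I_n) : injective f -> perm_of f =1 f.
Proof.
move=> inj x; rewrite /perm_of; case: injectiveP => [h|[]//].
by rewrite permE.
Qed.

(* sigma = (1 2 ... n-1): label k |-> k+1 (k <= n-2), n-1 |-> 1, n |-> n. *)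
Definition sigma_fun {n} (i : 'I_n) : 'I_n :=
  insubd i (if i < n.-1 then i.+1 %% n.-1 else val i).
Definition sigma n : {perm 'I_n} := perm_of (@sigma_fun n).

(* rho: label k |-> n-1-k (1 <= k <= n-2), n-1 |-> n, n |-> n-1. *)
Definition rho_fun {n} (i : 'I_n) : 'I_n :=
  insubd i (if i < n.-2 then n - 3 - i else if val i == n.-2 then n.-1 else n.-2).
Definition rho n : {perm 'I_n} := perm_of (@rho_fun n).

(* m_a: multiplication by a on Z/(n-1) (labels 1..n-1, with n-1 ~ 0), n |-> n.
   Label k |-> the label in {1..n-1} congruent to a*k mod n-1, whose index is
   (a*k + (n-2)) mod (n-1). *)
Definition mult_fun {n} (a : nat) (i : 'I_n) : 'I_n :=
  insubd i (if i < n.-1 then (a * i.+1 + n.-2) %% n.-1 else val i).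
Definition mult n (a : nat) : {perm 'I_n} := perm_of (@mult_fun n a).

Lemma val_insubd n (i : 'I_n) k : k < n -> val (insubd i k) = k.
Proof. by move=> h; rewrite insubdK. Qed.

Lemma sigma_fun_inj n : injective (@sigma_fun n).
Proof.
move=> i j; rewrite /sigma_fun => /(congr1 val).
have ltn := ltn_ord i; have ltj := ltn_ord j.
rewrite !val_insubd; last 2 first.
- case: ifP => h //; apply: leq_trans (ltn_pmod _ _) _; lia.
- case: ifP => h //; apply: leq_trans (ltn_pmod _ _) _; lia.
move=> e; apply: val_inj => /=.
have mS k : k < n.-1 -> k.+1 %% n.-1 = if k.+1 == n.-1 then 0 else k.+1.
  move=> h; case: eqP => [->|ne]; first by rewrite modnn.
  by rewrite modn_small //; lia.
move: e; case: (ltnP i n.-1) => hi; case: (ltnP j n.-1) => hj //;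
  rewrite ?mS //; repeat case: eqP; move=> /= *; lia.
Qed.

Lemma rho_fun_inj n : injective (@rho_fun n).
Proof.
move=> i j; rewrite /rho_fun => /(congr1 val).
have ltn := ltn_ord i; have ltj := ltn_ord j.
rewrite !val_insubd; last 2 first.
- by repeat case: ifP; move=> /= *; lia.
- by repeat case: ifP; move=> /= *; lia.
by move=> e; apply: val_inj; move: e; repeat case: ifP; move=> /= *; lia.
Qed.

Lemma mult_fun_inj n a : coprime a n.-1 -> injective (@mult_fun n a).
Proof.
move=> co i j; rewrite /mult_fun => /(congr1 val).
have ltn := ltn_ord i; have ltj := ltn_ord j.
have md k : 0 < n.-1 -> k %% n.-1 < n.
  by move=> p; apply: leq_trans (ltn_pmod _ p) _; lia.
rewrite !val_insubd; last 2 first.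
- by case: ifP => h //; apply: md; lia.
- by case: ifP => h //; apply: md; lia.
move=> e; apply: val_inj; move: e => /=.
have key x y : y <= x -> x < n.-1 ->
    a * x.+1 + n.-2 = a * y.+1 + n.-2 %[mod n.-1] -> x = y.
  move=> yx xn /eqP; rewrite eqn_modDr eqn_mod_dvd ?leq_mul2l ?ltnS ?yx ?orbT //.
  rewrite -mulnBr Gauss_dvdr; last by rewrite coprime_sym.
  rewrite subSS => d; have : x - y = 0 \/ 0 < x - y by lia.
  by case=> [|p]; [lia | have := dvdn_leq p d; lia].
case: (ltnP i n.-1) => hi; case: (ltnP j n.-1) => hj //=.
- move=> e; case: (leqP j i) => ji.
  + by apply: key.
  + by apply/esym/key; [lia | | ].
- move=> e; have := @ltn_pmod (a * i.+1 + n.-2) n.-1 ltac:(lia).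
  by rewrite e /=; lia.
- move=> e; have := @ltn_pmod (a * j.+1 + n.-2) n.-1 ltac:(lia).
  by rewrite -e /=; lia.
Qed.

Lemma sigmaE n : sigma n =1 @sigma_fun n.
Proof. exact: perm_ofE (@sigma_fun_inj n). Qed.
Lemma rhoE n : rho n =1 @rho_fun n.
Proof. exact: perm_ofE (@rho_fun_inj n). Qed.
Lemma multE n a : coprime a n.-1 -> mult n a =1 @mult_fun n a.
Proof. by move=> co; apply: perm_ofE; apply: mult_fun_inj. Qed.

(* Main.v *)
Require Import Defs.
From mathcomp Require Import all_boot all_fingroup zify.

Lemma modE N A B p q : A + p*N = B + q*N -> A %% N = B %% N.
Proof. by move=> e; rewrite -(modnMDl p A) -(modnMDl q B) [p*N + A]addnC e addnC. Qed.

Lemma sigma_val n (i : 'I_n) : val (sigma n i) = if i < n.-1 then i.+1 %% n.-1 else i.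
Proof.
have B : (if i < n.-1 then i.+1 %% n.-1 else val i) < n.
  have := ltn_ord i; case: ifP => h // _; apply: leq_trans (ltn_pmod _ _) _; lia.
by rewrite sigmaE /sigma_fun insubdK.
Qed.

Lemma mult_val n a (i : 'I_n) : coprime a n.-1 ->
  val (mult n a i) = if i < n.-1 then (a * i.+1 + n.-2) %% n.-1 else i.
Proof.
move=> co.
have B : (if i < n.-1 then (a * i.+1 + n.-2) %% n.-1 else val i) < n.
  have := ltn_ord i; case: ifP => h // _; apply: leq_trans (ltn_pmod _ _) _; lia.
by rewrite (Defs.multE co) /mult_fun insubdK.
Qed.

Lemma rho_val n (i : 'I_n) : val (rho n i) =
  if i < n.-2 then n - 3 - i else if val i == n.-2 then n.-1 else n.-2.
Proof.
have B : (if i < n.-2 then n - 3 - i else if val i == n.-2 then n.-1 else n.-2) < n.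
  by have := ltn_ord i; repeat case: ifP; move=> /= *; lia.
by rewrite rhoE /rho_fun insubdK.
Qed.

Lemma sigmaX_val n k (z : 'I_n) :
  val ((sigma n ^+ k)%g z) = if z < n.-1 then (z + k) %% n.-1 else z.
Proof.
elim: k => [|k IH].
  by rewrite expg0 perm1 addn0; case: ifP => // h; rewrite modn_small.
rewrite expgSr permM sigma_val IH.
case: (ltnP z n.-1) => h.
  have -> : (z + k) %% n.-1 < n.-1 by apply: ltn_pmod; lia.
  by rewrite -addn1 modnDml addn1 addnS.
by rewrite ltnNge h.
Qed.

Lemma sigmaX_mod n x y : x %% n.-1 = y %% n.-1 -> (sigma n ^+ x)%g = (sigma n ^+ y)%g.
Proof.
move=> e; apply/permP => z; apply: val_inj; rewrite !sigmaX_val.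
by case: ifP => // _; rewrite -modnDmr e modnDmr.
Qed.

Lemma mult_fix n a (z : 'I_n) : coprime a n.-1 -> n.-1 <= z -> mult n a z = z.
Proof. by move=> co h; apply: val_inj; rewrite mult_val // ltnNge h. Qed.

Lemma mult_last n a (z : 'I_n) : coprime a n.-1 -> 2 <= n -> val z = n.-2 ->
  val (mult n a z) = n.-2.
Proof.
move=> co h2 hz; rewrite mult_val // hz.
have -> : n.-2 < n.-1 by lia.
have -> : (n.-2).+1 = n.-1 by lia.
by rewrite modnMDl modn_small //; lia.
Qed.

Lemma mult_sigma n a k (z : 'I_n) : coprime a n.-1 -> 2 <= n ->
  mult n a ((sigma n ^+ k)%g z) = (sigma n ^+ (a * k))%g (mult n a z).
Proof.
move=> co h2; apply: val_inj.
rewrite mult_val // !sigmaX_val mult_val //.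
case: (ltnP z n.-1) => h; last by rewrite ltnNge h.
have -> : (z + k) %% n.-1 < n.-1 by apply: ltn_pmod; lia.
have -> : (a * z.+1 + n.-2) %% n.-1 < n.-1 by apply: ltn_pmod; lia.
rewrite modnDml.
have e := divn_eq (z + k) n.-1.
set q := (z + k) %/ n.-1 in e *; set r := (z + k) %% n.-1 in e *.
apply: (@modE _ _ _ (a * q) 0).
have : a * (z + k) = a * (q * n.-1) + a * r by rewrite e mulnDr.
rewrite !mulnA; lia.
Qed.

Lemma mult_lab n a (y : 'I_n) : coprime a n.-1 -> y < n.-1 ->
  (val (mult n a y)).+1 %% n.-1 = (a * y.+1) %% n.-1.
Proof.
move=> co h; rewrite mult_val // h -addn1 modnDml -addnA addn1.
have -> : (n.-2).+1 = n.-1 by lia.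
by rewrite modnDr.
Qed.

Lemma mult_rho n a (z : 'I_n) : coprime a n.-1 -> 2 <= n ->
  mult n a (rho n z) = rho n (mult n a z).
Proof.
move=> co h2; have lz := ltn_ord z.
have hn2 : n.-2 < n by lia.
case: (ltnP z n.-2) => hz.
- have wne : val (mult n a z) != n.-2.
    apply/eqP => e.
    have e2 : mult n a z = mult n a (Ordinal hn2).
      by apply: val_inj; rewrite e mult_last.
    by move/perm_inj: e2 => /(congr1 val) /= ez; lia.
  have wlt : val (mult n a z) < n.-1.
    rewrite mult_val // (_ : z < n.-1) //; last by lia.
    apply: ltn_pmod; lia.
  have rz : val (rho n z) = n - 3 - z by rewrite rho_val hz.
  apply: val_inj; rewrite mult_val // rz rho_val.
  have -> : n - 3 - z < n.-1 by lia.
  have -> : val (mult n a z) < n.-2 by lia.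
  have wv : (mult n a z : nat) = (a * z.+1 + n.-2) %% n.-1.
    by rewrite mult_val // (_ : z < n.-1) //; lia.
  have wlt2 : nat_of_ord (mult n a z) < n.-1 := wlt. have wne2 : nat_of_ord (mult n a z) != n.-2 := wne. clear wlt wne.
  move: wlt2 wne2; rewrite wv; move: wv => _.

  have e := divn_eq (a * z.+1 + n.-2) n.-1.
  set q := (a * z.+1 + n.-2) %/ n.-1 in e *; set w := (a * z.+1 + n.-2) %% n.-1 in e *.
  move=> wlt wne.
  rewrite -[RHS](@modn_small _ n.-1); last by lia.
  apply: (@modE _ _ _ q (a.+1)).
  have : a * (n - 3 - z).+1 + a * z.+1 = a * n.-1.
    by rewrite -mulnDr; congr (_ * _); lia.
  rewrite mulSn; lia.
- case: (eqVneq (val z) n.-2) => ez.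
  + have rz : val (rho n z) = n.-1.
      by rewrite rho_val ltnNge hz /= ifT //; apply/eqP.
    have mz : val (mult n a z) = n.-2 by rewrite mult_last.
    apply: val_inj; rewrite mult_fix //; last by rewrite rz.
    by rewrite rz rho_val mz ltnn ifT //; apply/eqP.
  + have ez2 : n.-2 < z by rewrite ltn_neqAle hz andbT eq_sym.
    have ez' : n.-1 <= z by lia.
    rewrite (@mult_fix n a z co ez'); apply: val_inj.
    have rz : nat_of_ord (rho n z) = n.-2.
      by rewrite rho_val ltnNge hz /= ifF //; apply: negbTE.
    rewrite mult_val // rz.
    have -> : n.-2 < n.-1 by lia.
    have -> : (n.-2).+1 = n.-1 by lia.
    by rewrite modnMDl modn_small //; lia.
Qed.

Theorem proposition10 (n : nat) (tau : {perm 'I_n}) :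
  2 <= n ->
  #[tau]%g = 2 ->
  (forall i : 'I_n, lab i = n -> lab (tau i) = n.-1) ->
  (forall i : 'I_n, 1 <= lab i <= n - 2 ->
     circ (circ tau (sigma n ^+ lab i)%g) tau =
     circ (circ (sigma n ^+ lab (tau i))%g tau)
          (sigma n ^+ lab (tau (rho n (tau i))))%g) ->
  forall a : nat, 1 <= a <= n - 1 -> coprime a (n - 1) ->
  let tau' := circ (circ (mult n a) tau) (mult n a)^-1%g in
  [/\ #[tau']%g = 2,
      (forall i : 'I_n, lab i = n -> lab (tau' i) = n.-1) &
      (forall i : 'I_n, 1 <= lab i <= n - 2 ->
         circ (circ tau' (sigma n ^+ lab i)%g) tau' =
         circ (circ (sigma n ^+ lab (tau' i))%g tau')
              (sigma n ^+ lab (tau' (rho n (tau' i))))%g)].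
Proof.
move=> h2 ord2 tn H a ha co0 tau'.
have co : coprime a n.-1 by rewrite -subn1.
set m := mult n a.
have tE z : tau' z = m (tau (m^-1%g z)) by rewrite /tau' !circE.
have tm z : tau' (m z) = m (tau z) by rewrite tE permK.
have hN : n.-1 < n by lia.
have hN2 : n.-2 < n by lia.
have tau2 z : tau (tau z) = z.
  have : (tau ^+ 2)%g = 1%g by rewrite -ord2 expg_order.
  by move/permP/(_ z); rewrite expgS expg1 permM perm1.
have tlast : val (tau (Ordinal hN)) = n.-2.
  have := tn (Ordinal hN); rewrite /lab /= => /(_ ltac:(lia)); lia.
have tsmall (y : 'I_n) : y < n.-2 -> tau y < n.-2.
  move=> hy; case: (ltnP (tau y) n.-2) => // hty.
  case: (eqVneq (val (tau y)) n.-2) => e.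
  - have : tau y = tau (Ordinal hN) by apply: val_inj; rewrite e tlast.
    by move/perm_inj/(congr1 val) => /= ey; lia.
  - have ety : tau y = Ordinal hN.
      apply: val_inj => /=; have := ltn_ord (tau y).
      have : n.-2 < tau y by rewrite ltn_neqAle hty andbT eq_sym.
      lia.
    by have := congr1 val (congr1 tau ety); rewrite tau2 tlast => ey; have ey2 : nat_of_ord y = n.-2 := ey; lia.
have rsmall (y : 'I_n) : y < n.-2 -> rho n y < n.-2.
  by move=> hy; rewrite rho_val hy; lia.
split.
- have -> : tau' = (tau ^ m)%g by rewrite /tau' /circ /conjg mulgA.
  by rewrite orderJ.
- move=> i; rewrite /lab => hi.
  have ei : i = Ordinal hN by apply: val_inj => /=; lia.
  have mi : m i = i by apply: mult_fix => //; lia.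
  rewrite tE -{1}mi permK.
  have := tn i; rewrite /lab => /(_ hi) ti.
  have e : val (tau i) = n.-2 by rewrite /=; lia.
  have := @mult_last n a _ co h2 e => /= E; rewrite /m E; lia.
- move=> i; rewrite /lab => hi.
  have hi' : i < n.-2 by lia.
  set j := (m^-1)%g i.
  have mj : m j = i by rewrite /j permKV.
  have hj : j < n.-2.
    case: (ltnP j n.-2) => // hj.
    case: (eqVneq (val j) n.-2) => e.
    + have E : nat_of_ord i = n.-2 by rewrite -mj; exact: (@mult_last n a _ co h2 e).
      lia.
    + have : n.-2 < j by rewrite ltn_neqAle hj andbT eq_sym.
      move=> hj2; have hj1 : n.-1 <= j by lia.
      have := @mult_fix n a j co hj1; rewrite -/m mj => ej.
      by move: hi'; rewrite ej; lia.
  have Hj := H j; rewrite /lab in Hj; have {Hj} := Hj ltac:(lia).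
  move/permP => Hj.
  apply/permP => x.
  rewrite -(permKV m x); set y := (m^-1)%g x.
  rewrite !circE /m -mj !permK -mult_rho // permK.
  have lm (w : 'I_n) : w < n.-1 ->
      (sigma n ^+ (mult n a w).+1)%g = (sigma n ^+ (a * w.+1))%g.
    by move=> hw; apply: sigmaX_mod; rewrite mult_lab.
  have ttj := tsmall j hj.
  have ttr := tsmall _ (rsmall _ ttj).
  rewrite (lm j); last by lia.
  rewrite (lm (tau j)); last by lia.
  rewrite (lm (tau (rho n (tau j)))); last by lia.
  rewrite -!mult_sigma // !permK.
  congr (mult n a _).
  by have := Hj y; rewrite !circE.
Qed.
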